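(* Let $F:\mathbb{R}\to(0,1)$ be a continuous, strictly increasing cumulative distribution function with $\lim_{u\to-\infty}F(u)=0$ and $\lim_{u\to+\infty}F(u)=1$, so that $F^{-1}:(0,1)\to\mathbb{R}$ exists and is continuous and strictly increasing. Define the mirror map $\Phi:(0,1)^m\to\mathbb{R}$ by $\Phi(\boldsymbol\theta)=\sum_{i=1}^m\int_{1/2}^{\theta_i}F^{-1}(u)\,du$ and its Bregman divergence $D_\Phi(\boldsymbol\theta,\boldsymbol\theta')=\Phi(\boldsymbol\theta)-\Phi(\boldsymbol\theta')-\langle\nabla\Phi(\boldsymbol\theta'),\boldsymbol\theta-\boldsymbol\theta'\rangle$. Let $\boldsymbol\eta^t\in\mathbb{R}^m$, $\boldsymbol\theta^t=F(\boldsymbol\eta^t)$ (coordinate-wise), $\mathbf{g}^t\in\mathbb{R}^m$ arbitrary and $\varepsilon>0$. Then the (stochastic) mirror descent step $$\boldsymbol\theta^{t+1}=\arg\min_{\boldsymbol\theta\in(0,1)^m}\Big\{\langle\mathbf{g}^t,\boldsymbol\theta-\boldsymbol\theta^t\rangle+\tfrac1\varepsilon D_\Phi(\boldsymbol\theta,\boldsymbol\theta^t)\Big\}$$ has a unique solution, and it equals $F(\boldsymbol\eta^{t+1})$ where $\boldsymbol\eta^{t+1}=\boldsymbol\eta^t-\varepsilon\mathbf{g}^t$. In particular, plain SGD on the latent weights $\boldsymbol\eta$, $\boldsymbol\eta^{t+1}=\boldsymbol\eta^t-\varepsilon\hat{\mathbf g}^t$, where $\hat{\mathbf g}^t$ is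 the identity straight-through-weights estimate (defined in the context) computed at $\boldsymbol\eta^t$, implements stochastic mirror descent in the weight probabilities $\boldsymbol\theta=F(\boldsymbol\eta)$ with divergence $D_\Phi$ and stochastic gradient $\hat{\mathbf g}^t$.
   Context: Binary weights $\mathbf{w}\in\{-1,1\}^m$ have independent coordinates with $P(w_i=1)=\theta_i$; they are modelled as $w_i=\mathrm{sign}(\eta_i-z_i)$ with independent noises $z_i$ of cdf $F$, so $\theta_i=F(\eta_i)$; the $\eta_i\in\mathbb{R}$ are called latent weights. For a differentiable loss $\mathcal{L}:\mathbb{R}^m\to\mathbb{R}$ one wishes to minimize $\mathbb{E}_{\mathbf{w}}[\mathcal{L}(\mathbf{w})]$ over $\boldsymbol\theta\in[0,1]^m$. The identity straight-through-weights estimator: on the forward pass sample $\mathbf{w}$ with $P(w_i=1)=F(\eta_i)$; on the backward pass set the gradient with respect to $\boldsymbol\eta$ to $\hat{\mathbf g}=2\nabla_{\mathbf w}\mathcal{L}(\mathbf{w})$ (i.e., the factor $F'(\eta_i)$ of the chain rule is omitted); $\hat{\mathbf g}$ serves as a (straight-through) estimate of $\nabla_{\boldsymbol\theta}\mathbb{E}_{\mathbf w}[\mathcal{L}(\mathbf w)]$. *)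

(* Defs.v *)
From Stdlib Require Import Reals.
From Coquelicot Require Import Coquelicot.
Open Scope R_scope.

(* Vectors in R^m are represented as functions nat -> R; only the
   coordinates i < m are meaningful. *)

Fixpoint sumR (m : nat) (f : nat -> R) : R :=
  match m with
  | O => 0
  | S k => sumR k f + f k
  end.

Definition inner (m : nat) (u v : nat -> R) : R := sumR m (fun i => u i * v i).

Definition in_open_box (m : nat) (th : nat -> R) : Prop :=
  forall i, (i < m)%nat -> 0 < th i < 1.

Definition upd (th : nat -> R) (i : nat) (x : R) : nat -> R :=
  fun j => if Nat.eqb j i then x else th j.

Definition Phi (Finv : R -> R) (m : nat) (th : nat -> R) : R :=
  sumR m (fun i => RInt Finv (1/2) (th i)).

Definition gradPhi (Finv : R -> R) (m : nat) (th : nat -> R) (i : nat) : R :=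
  Derive (fun x => Phi Finv m (upd th i x)) (th i).

Definition D_Phi (Finv : R -> R) (m : nat) (th th' : nat -> R) : R :=
  Phi Finv m th - Phi Finv m th'
  - inner m (gradPhi Finv m th') (fun i => th i - th' i).

Definition md_objective (Finv : R -> R) (m : nat) (g tht : nat -> R) (eps : R)
  (th : nat -> R) : R :=
  inner m g (fun i => th i - tht i) + / eps * D_Phi Finv m th tht.

(* Main.v *)
Require Import Defs.
From Stdlib Require Import Reals Lra Lia.
From Coquelicot Require Import Coquelicot.
Open Scope R_scope.

Lemma ballR (x e y : R) : ball x e y <-> Rabs (y - x) < e.
Proof. reflexivity. Qed.

Lemma Finv_cont (F Finv : R -> R)
  (HFincr : forall x y, x < y -> F x < F y)
  (HFrange : forall x, 0 < F x < 1)
  (HFinv1 : forall u, 0 < u < 1 -> F (Finv u) = u)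
  (HFinv2 : forall x, Finv (F x) = x) u :
  0 < u < 1 -> continuous Finv u.
Proof.
  intros Hu. apply filterlim_locally. intros [e He]. simpl.
  set (a := Finv u).
  assert (H1 : F (a - e/2) < u). { rewrite <- (HFinv1 u Hu). apply HFincr. unfold a; lra. }
  assert (H2 : u < F (a + e/2)). { rewrite <- (HFinv1 u Hu). apply HFincr. unfold a; lra. }
  assert (Hd : 0 < Rmin (u - F (a - e/2)) (F (a + e/2) - u)) by (apply Rmin_glb_lt; lra).
  exists (mkposreal _ Hd). intros v Hv. apply ballR in Hv. cbn [pos] in Hv. apply ballR.
  assert (Hm1 := Rmin_l (u - F (a - e/2)) (F (a + e/2) - u)).
  assert (Hm2 := Rmin_r (u - F (a - e/2)) (F (a + e/2) - u)).
  change (Rabs (v - u) < Rmin (u - F (a - e / 2)) (F (a + e / 2) - u)) in Hv.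
  apply Rabs_def2 in Hv. destruct Hv as [Hv1 Hv2].
  assert (Hv : 0 < v < 1).
  { pose proof (HFrange (a - e/2)); pose proof (HFrange (a + e/2)). lra. }
  change (Rabs (Finv v - a) < e). apply Rabs_def1.
  - destruct (Rlt_or_le (Finv v - a) e) as [|Hc]; [lra|].
    assert (F (a + e/2) < F (Finv v)) by (apply HFincr; lra).
    rewrite HFinv1 in H by exact Hv. idtac. lra.
  - destruct (Rlt_or_le (-e) (Finv v - a)) as [|Hc]; [lra|].
    assert (F (Finv v) < F (a - e/2)) by (apply HFincr; lra).
    rewrite HFinv1 in H by exact Hv. idtac. lra.
Qed.

Lemma exR (Finv : R -> R) (Hc : forall u, 0 < u < 1 -> continuous Finv u) a b :
  0 < a < 1 -> 0 < b < 1 -> ex_RInt Finv a b.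
Proof.
  intros Ha Hb. apply (@ex_RInt_continuous R_CompleteNormedModule). intros z Hz. apply Hc.
  split.
  - apply Rlt_le_trans with (Rmin a b); [|lra]. apply Rmin_glb_lt; lra.
  - apply Rle_lt_trans with (Rmax a b); [lra|]. apply Rmax_lub_lt; lra.
Qed.

Lemma RInt_lb (Finv : R -> R) a b k : a <= b -> ex_RInt Finv a b ->
  (forall t, a < t < b -> k <= Finv t) -> k * (b - a) <= RInt Finv a b.
Proof.
  intros Hab Hex Hk.
  assert (E : RInt (fun _ => k) a b = k * (b - a)).
  { rewrite RInt_const. unfold scal; simpl. unfold mult; simpl. ring. }
  rewrite <- E. apply RInt_le; auto. apply ex_RInt_const.
Qed.

Lemma RInt_ub (Finv : R -> R) a b k : a <= b -> ex_RInt Finv a b ->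
  (forall t, a < t < b -> Finv t <= k) -> RInt Finv a b <= k * (b - a).
Proof.
  intros Hab Hex Hk.
  assert (E : RInt (fun _ => k) a b = k * (b - a)).
  { rewrite RInt_const. unfold scal; simpl. unfold mult; simpl. ring. }
  rewrite <- E. apply RInt_le; auto. apply ex_RInt_const.
Qed.

Lemma G_deriv (Finv : R -> R) (Hc : forall u, 0 < u < 1 -> continuous Finv u) y :
  0 < y < 1 -> is_derive (fun x => RInt Finv (1/2) x) y (Finv y).
Proof.
  intros Hy. apply (is_derive_RInt Finv (fun x => RInt Finv (1/2) x) (1/2) y); [|apply Hc; exact Hy].
  assert (Hd : 0 < Rmin y (1 - y)) by (apply Rmin_glb_lt; lra).
  exists (mkposreal _ Hd). intros b Hb.
  change (Rabs (b - y) < Rmin y (1 - y)) in Hb.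
  assert (Hm1 := Rmin_l y (1 - y)). assert (Hm2 := Rmin_r y (1 - y)).
  apply Rabs_def2 in Hb.
  apply (@RInt_correct R_CompleteNormedModule). apply exR; auto; lra.
Qed.

Lemma key (Finv : R -> R) (Hc : forall u, 0 < u < 1 -> continuous Finv u)
  (Hinc : forall u v, 0 < u -> u < v -> v < 1 -> Finv u < Finv v) x y :
  0 < x < 1 -> 0 < y < 1 -> x <> y ->
  Finv y * (x - y) < RInt Finv (1/2) x - RInt Finv (1/2) y.
Proof.
  intros Hx Hy Hxy.
  assert (E : RInt Finv (1/2) x - RInt Finv (1/2) y = RInt Finv y x).
  { rewrite <- (RInt_Chasles Finv (1/2) y x) by (apply exR; auto; lra).
    change (RInt Finv (1/2) y + RInt Finv y x - RInt Finv (1/2) y = RInt Finv y x). ring. }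
  rewrite E. set (z := (x + y) / 2).
  destruct (Rlt_or_le y x) as [Hlt|Hle].
  - rewrite <- (RInt_Chasles Finv y z x) by (apply exR; auto; unfold z; lra).
    change (Finv y * (x - y) < RInt Finv y z + RInt Finv z x).
    assert (A1 : Finv y * (z - y) <= RInt Finv y z).
    { apply RInt_lb. unfold z; lra. apply exR; auto; unfold z; lra.
      intros t Ht. left. apply Hinc; unfold z in *; lra. }
    assert (A2 : Finv z * (x - z) <= RInt Finv z x).
    { apply RInt_lb. unfold z; lra. apply exR; auto; unfold z; lra.
      intros t Ht. left. apply Hinc; unfold z in *; lra. }
    assert (A3 : Finv y < Finv z) by (apply Hinc; unfold z; lra).
    assert (0 < x - z) by (unfold z; lra).
    assert (Finv y * (x - z) < Finv z * (x - z)) by (apply Rmult_lt_compat_r; lra).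
    unfold z in *; nra.
  - assert (Hlt : x < y) by lra.
    rewrite <- (opp_RInt_swap Finv x y) by (apply exR; auto).
    rewrite <- (RInt_Chasles Finv x z y) by (apply exR; auto; unfold z; lra).
    change (Finv y * (x - y) < - (RInt Finv x z + RInt Finv z y)).
    assert (A1 : RInt Finv z y <= Finv y * (y - z)).
    { apply RInt_ub. unfold z; lra. apply exR; auto; unfold z; lra.
      intros t Ht. left. apply Hinc; unfold z in *; lra. }
    assert (A2 : RInt Finv x z <= Finv z * (z - x)).
    { apply RInt_ub. unfold z; lra. apply exR; auto; unfold z; lra.
      intros t Ht. left. apply Hinc; unfold z in *; lra. }
    assert (A3 : Finv z < Finv y) by (apply Hinc; unfold z; lra).
    assert (0 < z - x) by (unfold z; lra).
    assert (Finv z * (z - x) < Finv y * (z - x)) by (apply Rmult_lt_compat_r; lra).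
    unfold z in *; nra.
Qed.

Lemma sumR_ext m f g : (forall i, (i < m)%nat -> f i = g i) -> sumR m f = sumR m g.
Proof.
  induction m; intros H; simpl; [reflexivity|].
  rewrite IHm by (intros; apply H; lia). rewrite H by lia. reflexivity.
Qed.

Lemma sumR_le m f g : (forall i, (i < m)%nat -> f i <= g i) -> sumR m f <= sumR m g.
Proof.
  induction m; intros H; simpl; [lra|].
  assert (sumR m f <= sumR m g) by (apply IHm; intros; apply H; lia).
  assert (f m <= g m) by (apply H; lia). lra.
Qed.

Lemma sumR_upd m (K : nat -> R -> R) th i x : (i < m)%nat ->
  sumR m (fun j => K j (upd th i x j)) = sumR m (fun j => K j (th j)) - K i (th i) + K i x.
Proof.
  induction m; intros Hi; [lia|]. simpl.
  destruct (Nat.eq_dec i m) as [->|Hne].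
  - rewrite (sumR_ext m (fun j => K j (upd th m x j)) (fun j => K j (th j))).
    + unfold upd. rewrite Nat.eqb_refl. ring.
    + intros j Hj. unfold upd. destruct (Nat.eqb_spec j m); [lia|reflexivity].
  - rewrite IHm by lia. unfold upd at 1.
    destruct (Nat.eqb_spec m i); [lia|]. ring.
Qed.

Lemma decomp m (g tht eta : nat -> R) (Gx : R -> R) e th :
  sumR m (fun j => g j * (th j - tht j) + e * (Gx (th j) - eta j * (th j - tht j)))
  = inner m g (fun j => th j - tht j)
    + e * (sumR m (fun j => Gx (th j)) - inner m eta (fun j => th j - tht j)).
Proof.
  induction m; simpl; unfold inner in *; simpl; [ring|]. rewrite IHm. ring.
Qed.

Lemma gradPhi_val (Finv : R -> R) (Hc : forall u, 0 < u < 1 -> continuous Finv u)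
  m th i : (i < m)%nat -> 0 < th i < 1 -> gradPhi Finv m th i = Finv (th i).
Proof.
  intros Hi Hth. unfold gradPhi, Phi. apply is_derive_unique.
  apply (is_derive_ext (fun x => plus (sumR m (fun j => RInt Finv (1/2) (th j)) - RInt Finv (1/2) (th i)) (RInt Finv (1/2) x))).
  - intros t. rewrite (sumR_upd m (fun _ y => RInt Finv (1/2) y)) by exact Hi.
    reflexivity.
  - replace (Finv (th i)) with (plus zero (Finv (th i))).
    + apply (@is_derive_plus R_AbsRing R_NormedModule). apply (@is_derive_const R_AbsRing R_NormedModule). apply G_deriv; auto.
    + apply plus_zero_l.
Qed.

Theorem proposition1 (F Finv : R -> R)
  (HFcont : forall x, continuous F x)
  (HFincr : forall x y, x < y -> F x < F y)
  (HFrange : forall x, 0 < F x < 1)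
  (HFlimm : is_lim F m_infty 0)
  (HFlimp : is_lim F p_infty 1)
  (HFinv1 : forall u, 0 < u < 1 -> F (Finv u) = u)
  (HFinv2 : forall x, Finv (F x) = x)
  (m : nat) (eta g : nat -> R) (eps : R) (Heps : 0 < eps) :
  let tht := fun i => F (eta i) in
  let thnew := fun i => F (eta i - eps * g i) in
  in_open_box m thnew /\
  (forall th, in_open_box m th ->
     md_objective Finv m g tht eps thnew <= md_objective Finv m g tht eps th) /\
  (forall th, in_open_box m th ->
     (forall th', in_open_box m th' ->
        md_objective Finv m g tht eps th <= md_objective Finv m g tht eps th') ->
     forall i, (i < m)%nat -> th i = thnew i).
Proof.
  intros tht thnew.
  assert (Hc : forall u, 0 < u < 1 -> continuous Finv u)
    by (intros; eapply Finv_cont; eauto).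
  assert (Hinc : forall u v, 0 < u -> u < v -> v < 1 -> Finv u < Finv v).
  { intros u v Hu Huv Hv. destruct (Rlt_or_le (Finv u) (Finv v)) as [|[Hl|He]]; auto.
    - apply HFincr in Hl. rewrite !HFinv1 in Hl by lra. lra.
    - apply (f_equal F) in He. rewrite !HFinv1 in He by lra. lra. }
  set (h := fun j x => g j * (x - tht j) + / eps * (RInt Finv (1/2) x - eta j * (x - tht j))).
  assert (Hobj : forall th, in_open_box m th -> md_objective Finv m g tht eps th
     = sumR m (fun j => h j (th j)) - / eps * Phi Finv m tht).
  { intros th Hth. unfold h. rewrite decomp.
    unfold md_objective, D_Phi.
    replace (inner m (gradPhi Finv m tht) (fun i => th i - tht i))
      with (inner m eta (fun i => th i - tht i)).
    - unfold Phi. ring.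
    - unfold inner. apply sumR_ext. intros i Hi. rewrite gradPhi_val; [|exact Hc|exact Hi|apply HFrange].
      unfold tht. rewrite HFinv2. reflexivity. }
  assert (Hbox : in_open_box m thnew) by (intros i _; apply HFrange).
  assert (Hpt : forall j x, 0 < x < 1 -> x <> thnew j -> h j (thnew j) < h j x).
  { intros j x Hx Hne.
    assert (K := key Finv Hc Hinc x (thnew j) Hx (HFrange _) Hne).
    unfold thnew in K at 1. rewrite HFinv2 in K.
    assert (E : h j x - h j (thnew j) = / eps *
      (RInt Finv (1/2) x - RInt Finv (1/2) (thnew j) - (eta j - eps * g j) * (x - thnew j))).
    { unfold h. field. lra. }
    assert (0 < / eps) by (apply Rinv_0_lt_compat; lra).
    assert (0 < / eps * (RInt Finv (1/2) x - RInt Finv (1/2) (thnew j) - (eta j - eps * g j) * (x - thnew j)))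
      by (apply Rmult_lt_0_compat; lra).
    lra. }
  split; [exact Hbox|split].
  - intros th Hth. rewrite !Hobj by assumption.
    assert (sumR m (fun j => h j (thnew j)) <= sumR m (fun j => h j (th j))); [|lra].
    apply sumR_le. intros i Hi.
    destruct (Req_dec (th i) (thnew i)) as [->|Hne]; [lra|].
    left. apply Hpt; auto.
  - intros th Hth Hmin i Hi.
    destruct (Req_dec (th i) (thnew i)) as [|Hne]; [assumption|exfalso].
    set (th' := upd th i (thnew i)).
    assert (Hth' : in_open_box m th').
    { intros j Hj. unfold th', upd. destruct (Nat.eqb j i); auto. }
    specialize (Hmin th' Hth'). rewrite !Hobj in Hmin by assumption.
    unfold th' in Hmin. rewrite (sumR_upd m h th i (thnew i) Hi) in Hmin.
    assert (h i (thnew i) < h i (th i)) by (apply Hpt; auto).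
    lra.
Qed.
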